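(* Let $d\ge 1$ and let $X$ be a mutual-visibility set of $\mathit{BF}(d)$. Then $|X\cap A_c|\le 2$ for every column $c\in\{0,1\}^d$.
   Context: Binary strings $c=c_0\cdots c_{d-1}$ have positions $0,\dots,d-1$ from the left; $c(i)$ is $c$ with bit $i$ complemented. The butterfly $\mathit{BF}(d)$ has vertex set $\{[\ell,c]:\ell\in\{0,\dots,d\},\ c\in\{0,1\}^d\}$ ($\ell$ is the level, $c$ the column); for $\ell\in\{0,\dots,d-1\}$, $[\ell,c]$ is adjacent to $[\ell+1,c']$ iff $c'=c$ or $c'=c(\ell)$, and there are no other edges. $A_c=\{[\ell,c]:\ell\in\{0,\dots,d\}\}$ is the column $c$ and $L_j=\{[j,c]:c\in\{0,1\}^d\}$ is level $j$. For a connected graph $G$ and $X\subseteq V(G)$, two vertices $x,y$ are $X$-visible if some shortest $x,y$-path has no internal vertex in $X$; $X$ is a mutual-visibility set if every two vertices of $X$ are $X$-visible; $\mu(G)$ is the maximum size of a mutual-visibility set. *)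

(* Defs.v *)
From mathcomp Require Import all_boot.
Set Implicit Arguments. Unset Strict Implicit. Unset Printing Implicit Defensive.

Section Graph.
Variables (T : finType) (e : rel T).

(* p = [v1; ...; vk] is a walk x = v0, v1, ..., vk = y of length size p *)
Definition walk (x : T) (p : seq T) (y : T) : bool := path e x p && (last x p == y).

Definition shortest_walk (x : T) (p : seq T) (y : T) : Prop :=
  walk x p y /\ forall q, walk x q y -> size p <= size q.

(* internal vertices of the walk x :: p (i.e. all except the endpoints) *)
Definition internal (p : seq T) : seq T := take (size p).-1 p.

Definition visible (X : {set T}) (x y : T) : Prop :=
  exists p, shortest_walk x p y /\ all (fun v => v \notin X) (internal p).

Definition mutual_visibility_set (X : {set T}) : Prop :=
  forall x y, x \in X -> y \in X -> x != y -> visible X x y.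
End Graph.

(* vertex [l, c] = (l, c) with l in {0..d}, c : {0,1}^d (positions 0..d-1) *)
Definition bf_vertex (d : nat) := ('I_d.+1 * {ffun 'I_d -> bool})%type.

Definition flip d (c : {ffun 'I_d -> bool}) (i : nat) : {ffun 'I_d -> bool} :=
  [ffun j : 'I_d => if val j == i then ~~ c j else c j].

Definition bf_up d (u v : bf_vertex d) : bool :=
  (val v.1 == (val u.1).+1) && ((v.2 == u.2) || (v.2 == flip u.2 (val u.1))).

Definition bf_adj d : rel (bf_vertex d) := fun u v => bf_up u v || bf_up v u.

Definition column d (c : {ffun 'I_d -> bool}) : {set bf_vertex d} :=
  [set v : bf_vertex d | v.2 == c].

(* Main.v *)
Require Import Defs.
From mathcomp Require Import all_boot.
From mathcomp Require Import zify.
Set Implicit Arguments. Unset Strict Implicit.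

Lemma adj_lvl d (u v : bf_vertex d) : bf_adj u v ->
  (v.1 : nat) = (u.1 : nat).+1 \/ (u.1 : nat) = (v.1 : nat).+1.
Proof.
by rewrite /bf_adj /bf_up => /orP [/andP [/eqP -> _] | /andP [/eqP -> _]]; auto.
Qed.

Lemma walk_lvl d (u : bf_vertex d) p : path (@bf_adj d) u p ->
  ((last u p).1 : nat) <= u.1 + size p /\ (u.1 : nat) <= (last u p).1 + size p.
Proof.
elim: p u => [|v p IH] u /=; first by rewrite addn0; split.
move/andP=> [huv hp]; have [h1 h2] := IH v hp.
case: (adj_lvl huv) => e; lia.
Qed.

Lemma mono_col d (u : bf_vertex d) p : path (@bf_adj d) u p ->
  u.1 + size p = (last u p).1 -> forall j : 'I_d,
  ((j : nat) < u.1 \/ ((last u p).1 : nat) <= j) -> (last u p).2 j = u.2 j.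
Proof.
elim: p u => [|v p IH] u /=; first done.
move=> /andP [huv hp] hs j hj.
have [h1 _] := walk_lvl hp.
have hup : bf_up u v.
  move: huv; rewrite /bf_adj => /orP [//|]; rewrite /bf_up /= => /andP [/eqP e _].
  exfalso; lia.
move: hup; rewrite /bf_up /= => /andP [/eqP e /orP hc].
rewrite (IH v hp _ j); [| lia | lia].
case: hc => /eqP ->; first done.
rewrite ffunE.
have -> : (val j == val u.1) = false by apply/eqP => /= ?; lia.
done.
Qed.

Fixpoint straight d (c : {ffun 'I_d -> bool}) (l n : nat) : seq (bf_vertex d) :=
  if n is n'.+1 then (inord l.+1, c) :: straight c l.+1 n' else [::].

Lemma size_straight d c l n : size (@straight d c l n) = n.
Proof. by elim: n l => [|n IH] l //=; rewrite IH. Qed.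

Lemma straight_walk d c l n : l + n <= d ->
  walk (@bf_adj d) (inord l, c) (straight c l n) (inord (l + n), c).
Proof.
rewrite /walk.
elim: n l => [|n IH] l hl /=; first by rewrite addn0 eqxx.
have := IH l.+1; rewrite addSnnS => /(_ hl) /andP [h1 h2].
rewrite h1 h2 andbT /bf_adj /bf_up /= !inordK; try lia.
by rewrite !eqxx.
Qed.

Lemma vert_eq d (u v : bf_vertex d) : (u.1 : nat) = v.1 -> u.2 = v.2 -> u = v.
Proof. by case: u v => [a b] [a' b'] /= h ->; rewrite (val_inj h). Qed.

Theorem lemma5p1 (d : nat) (hd : 1 <= d) (X : {set bf_vertex d}) :
  mutual_visibility_set (@bf_adj d) X ->
  forall c : {ffun 'I_d -> bool}, #|X :&: column c| <= 2.
Proof.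
move=> mv c; set S := X :&: column c.
rewrite leqNgt; apply/negP => hS.
have inS v : v \in S -> v \in X /\ v.2 = c.
  by rewrite !inE => /andP [-> /eqP].
have [x0 Hx0] : exists x0, x0 \in S.
  by apply/set0Pn; rewrite -card_gt0; lia.
have [x [Sx minx]] : exists x : bf_vertex d, x \in S /\ forall j, j \in S -> (x.1 : nat) <= j.1.
  by case: (arg_minnP (fun v : bf_vertex d => (v.1 : nat)) Hx0) => x Sx m; exists x.
have [z [Sz maxz]] : exists z : bf_vertex d, z \in S /\ forall j, j \in S -> (j.1 : nat) <= z.1.
  by case: (arg_maxnP (fun v : bf_vertex d => (v.1 : nat)) Hx0) => z Sz m; exists z.
have [y Hy] : exists y, y \in S :\: [set x; z].
  apply/set0Pn; rewrite -card_gt0 cardsD.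
  have : #|S :&: [set x; z]| <= 2.
    apply: leq_trans (subset_leq_card (subsetIr _ _)) _.
    by rewrite cards2; case: (x != z).
  lia.
move: Hy; rewrite in_setD in_set2 negb_or => /andP [/andP [nyx nyz] Sy].
have [Xx cx] := inS _ Sx; have [Xy cy] := inS _ Sy; have [Xz cz] := inS _ Sz.
have l12 : (x.1 : nat) < y.1.
  rewrite ltn_neqAle minx // andbT; apply/negP => /eqP h.
  by move/eqP: nyx; apply; apply: vert_eq; rewrite // cx cy.
have l23 : (y.1 : nat) < z.1.
  have := maxz _ Sy; rewrite /= => hm; rewrite ltn_neqAle hm andbT; apply/negP => /eqP h.
  by move/eqP: nyz; apply; apply: vert_eq; rewrite // cz cy.
have nxz : x != z by apply/eqP => e; rewrite e in l12; lia.
have [p [[wp minp] allp]] := mv x z Xx Xz nxz.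
move: wp; rewrite /walk => /andP [pp /eqP lp].
have sp : size p = z.1 - x.1.
  have [h1 _] := walk_lvl pp; rewrite lp in h1.
  have : size p <= z.1 - x.1.
    have := minp (straight c x.1 (z.1 - x.1)).
    rewrite size_straight; apply.
    have hz := ltn_ord z.1.
    have e1 : x = (inord x.1, c) by apply: vert_eq; rewrite //= inordK ?cx.
    have e2 : z = (inord (x.1 + (z.1 - x.1)), c).
      apply: vert_eq; rewrite //= ?inordK ?cz //; clear -l12 l23 hz; lia.
    have := @straight_walk d c x.1 (z.1 - x.1).
    rewrite -e1 -e2; apply; clear -l12 l23 hz; lia.
  by move=> h2; apply/eqP; rewrite eqn_leq h2 /= leq_subLR.
set k := y.1 - x.1.
have l13 : (x.1 : nat) < z.1 by apply: ltn_trans l23.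
have hk : k <= size p by rewrite sp leq_sub2r // ltnW.
have pp' : path (@bf_adj d) x (take k p ++ drop k p) by rewrite cat_take_drop.
have lp' : last x (take k p ++ drop k p) = z by rewrite cat_take_drop.
move: pp' lp'; rewrite cat_path last_cat => /andP [p1 p2] lp'.
pose v : bf_vertex d := last x (take k p).
have [a1 _] := walk_lvl p1.
rewrite size_takel // in a1.
have a1' : (v.1 : nat) <= x.1 + k := a1.
have [a2 _] := walk_lvl p2.
rewrite lp' size_drop sp in a2.
have a2' : (z.1 : nat) <= v.1 + ((z.1 - x.1) - k) := a2.
have lv : (v.1 : nat) = y.1.
  rewrite /k in a1' a2'; clear -a1' a2' l12 l23; lia.
have c1 : forall j : 'I_d, ((j : nat) < x.1 \/ (v.1 : nat) <= j) -> v.2 j = x.2 j.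
  apply: (mono_col p1); rewrite size_takel // /v lv /k; clear -l12; lia.
have c2 : forall j : 'I_d, ((j : nat) < v.1 \/ (z.1 : nat) <= j) -> z.2 j = v.2 j.
  rewrite -lp'; apply: (mono_col p2).
  rewrite lp' size_drop sp; change ((v.1 : nat) + (z.1 - x.1 - k) = z.1).
  rewrite lv /k; clear -l12 l23; lia.
have vy : v = y.
  apply: vert_eq => //; rewrite cy; apply/ffunP => j.
  case: (ltnP j y.1) => hj.
    by rewrite -cz c2 // lv; left.
  by rewrite -cx c1 // lv; right.
have vin : v \in internal p.
  have : v \in x :: take k p by apply: mem_last.
  rewrite inE => /orP [/eqP e | h].
    by move: lv; rewrite e => e'; rewrite e' ltnn in l12.
  have hk2 : k <= (size p).-1 by rewrite sp /k; clear -l12 l23; lia.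
  by apply: (@mem_take k); rewrite take_takel.
by move/allP: allp => /(_ v vin); rewrite vy Xy.
Qed.
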